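(* Let $k>4$ be an even integer. Assume that when the procedure $\mathrm{Permutations}$ is run on the list $(0,1,2,\dots,k-1)$ (i.e. $\mathrm{Permutations}(L,0,\mathrm{Func})$ with $L=(0,1,\dots,k-1)$), the last permutation it produces is $(1,4,3,5,6,7,8,\dots,k-1,2,0)$ (and, correspondingly, for any list of $k$ pairwise distinct elements $(x_0,\dots,x_{k-1})$ the last permutation produced is $(x_1,x_4,x_3,x_5,x_6,\dots,x_{k-1},x_2,x_0)$). Then, when $\mathrm{Permutations}$ is run on the list $(0,1,2,\dots,k)$ of $k+1$ elements, each of the $k+1$ elements is inserted exactly once at the beginning of the list (i.e. the $k+1$ recursive calls $\mathrm{Permutations}(L,1,\mathrm{Func})$ made by the top-level invocation are made with pairwise distinct elements at position $0$), and the last permutation produced is $(1,0,2,3,4,\dots,k)$, the initial sequence with its first two elements swapped.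
   Context: Lists are 0-indexed. For a list $L$, $\mathrm{extract}(L,j)$ removes the element at position $j$ from $L$ and returns it; $\mathrm{Insert}(L,i,x)$ inserts $x$ into $L$ so that it occupies position $i$, shifting the elements previously at positions $\ge i$ one step to the right. Each combined operation $\mathrm{Insert}(L,i,\mathrm{extract}(L,j))$ first extracts, then inserts, so the length of $L$ is unchanged. The recursive procedure $\mathrm{Permutations}(L,i,\mathrm{Func})$ (with $\mathrm{Func}$ a callback) is: let $n=\mathrm{length}(L)$. If $i\ge n-1$, call $\mathrm{Func}(L)$. Otherwise: (1) call $\mathrm{Permutations}(L,i+1,\mathrm{Func})$; (2) do $\mathrm{Insert}(L,i,\mathrm{extract}(L,i+1))$ and call $\mathrm{Permutations}(L,i+1,\mathrm{Func})$; (3) repeat $\max(n-i-3,0)$ times: if $n-i$ is even, do $\mathrm{Insert}(L,i,\mathrm{extract}(L,n-1))$, otherwise do $\mathrm{Insert}(L,i,\mathrm{extract}(L,i+1))$; then call $\mathrm{Permutations}(L,i+1,\mathrm{Func})$; (4) if $n-i>2$: do $\mathrm{Insert}(L,i,\mathrm{extract}(L,i+1))$ and call $\mathrm{Permutations}(L,i+1,\mathrm{Func})$. The main call is $\mathrm{Permutations}(L,0,\mathrm{Func})$; each list passed to $\mathrm{Func}$ is a ''produced permutation''. A call $\mathrm{Permutations}(L,i,\mathrm{Func})$ modifies only positions $\ge i$, and its effect on that suffix depends only on the suffix length $n-i$ (so the assumed behaviour on $(0,\dots,k-1)$ determines a fixed rearrangement applied to any suffix of length $k$). The ''last permutation produced''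 when run on a list is the state of the list when the main call returns (which equals the argument of the last call to $\mathrm{Func}$). *)

(* Defs.v *)
From mathcomp Require Import all_boot.
Set Implicit Arguments. Unset Strict Implicit. Unset Printing Implicit Defensive.

(* mv L i j = Insert(L, i, extract(L, j)) : extract the element at position j,
   then insert it so that it occupies position i (0-indexed).
   (If j is out of range, L is returned unchanged; this never happens below.) *)
Definition mv (T : Type) (L : seq T) (i j : nat) : seq T :=
  match drop j L with
  | x :: rest => let L' := take j L ++ rest in take i L' ++ x :: drop i L'
  | [::] => L
  end.

(* perm_aux m i L runs Permutations(L, i, Func) where m = n - i, n = size L.
   It returns (final state of L when the call returns,
               list of the states of L at each immediate recursive call
               Permutations(L, i+1, Func), in order). *)
Fixpoint perm_aux (T : Type) (m i : nat) (L : seq T) {struct m}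
  : seq T * seq (seq T) :=
  match m with
  | 0 => (L, [::])
  | m'.+1 =>
    if m' == 0 then (L, [::]) else
    let n := size L in
    let call := fun L0 : seq T => (perm_aux m' i.+1 L0).1 in
    let s1 := L in
    let L1 := call s1 in
    let s2 := mv L1 i i.+1 in
    let L2 := call s2 in
    let j := if ~~ odd m then n.-1 else i.+1 in
    let p3 := iter (m - 3)
                (fun p : seq T * seq (seq T) =>
                   let s := mv p.1 i j in (call s, rcons p.2 s))
                (L2, [:: s1; s2]) in
    if 2 < m then
      let s4 := mv p3.1 i i.+1 in (call s4, rcons p3.2 s4)
    else p3
  end.

Definition Permutations (T : Type) (L : seq T) : seq T * seq (seq T) :=
  perm_aux (size L) 0 L.

(* The last permutation produced = state of the list when the main call returns. *)
Definition last_perm (T : Type) (L : seq T) : seq T := (Permutations L).1.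

Definition top_calls (T : Type) (L : seq T) : seq (seq T) := (Permutations L).2.

(* Main.v *)
Require Import Defs.
From mathcomp Require Import all_boot zify.
Set Implicit Arguments. Unset Strict Implicit.

Lemma mv_cons T (x:T) L i j : mv (x::L) i.+1 j.+1 = x :: mv L i j.
Proof. rewrite /mv /=. by case: (drop j L). Qed.

Lemma size_mv T (L : seq T) i j : size (mv L i j) = size L.
Proof.
rewrite /mv. case E: (drop j L) => [|y rest] //.
rewrite size_cat /= addnS -size_cat cat_take_drop size_cat /=.
by rewrite -[in RHS](cat_take_drop j L) E size_cat /= addnS.
Qed.

Lemma iter_pair A B (f : A -> A) (g : A * B -> B) n x :
  (iter n (fun p => (f p.1, g p)) x).1 = iter n f x.1.
Proof. by elim: n => //= n ->. Qed.

Definition pcall T m i (L : seq T) := (perm_aux m i L).1.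

Lemma perm_aux_eq T m' i (L : seq T) : perm_aux m'.+1 i L =
    if m' == 0 then (L, [::]) else
    let n := size L in
    let call := fun L0 : seq T => (perm_aux m' i.+1 L0).1 in
    let s1 := L in
    let L1 := call s1 in
    let s2 := mv L1 i i.+1 in
    let L2 := call s2 in
    let j := if ~~ odd m'.+1 then n.-1 else i.+1 in
    let p3 := iter (m'.+1 - 3)
                (fun p : seq T * seq (seq T) =>
                   let s := mv p.1 i j in (call s, rcons p.2 s))
                (L2, [:: s1; s2]) in
    if 2 < m'.+1 then
      let s4 := mv p3.1 i i.+1 in (call s4, rcons p3.2 s4)
    else p3.
Proof. reflexivity. Qed.

Lemma fst_pair A B (a:A) (b:B) : (a,b).1 = a. Proof. by []. Qed.

Lemma perm_aux1 T m i (L : seq T) : pcall m.+2 i L =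
  if 2 < m.+2 then pcall m.+1 i.+1 (mv (iter (m.+2 - 3)
     (fun a => pcall m.+1 i.+1 (mv a i (if ~~ odd m.+2 then (size L).-1 else i.+1))) 
     (pcall m.+1 i.+1 (mv (pcall m.+1 i.+1 L) i i.+1))) i i.+1)
  else pcall m.+1 i.+1 (mv (pcall m.+1 i.+1 L) i i.+1).
Proof.
rewrite /pcall. case: m => [|m]; first reflexivity.
rewrite perm_aux_eq.
have -> : (m.+2 == 0) = false by [].
have -> : (2 < m.+3) = true by [].
cbv zeta beta iota.
rewrite fst_pair.
rewrite (iter_pair (fun a => (perm_aux m.+2 i.+1 (mv a i (if ~~ odd m.+3 then (size L).-1 else i.+1))).1)).
reflexivity.
Qed.

Lemma iter_inv A (P : A -> Prop) f n x :
  (forall a, P a -> P (f a)) -> P x -> P (iter n f x).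
Proof. move=> H; elim: n => //= n IH /IH; exact: H. Qed.

Lemma iter_size T (f : seq T -> seq T) n x :
  (forall a, size (f a) = size a) -> size (iter n f x) = size x.
Proof. by move=> H; elim: n => //= n <-. Qed.

Lemma size_pcall T m i (L : seq T) : size (pcall m i L) = size L.
Proof.
elim: m i L => [|m IH] i L; first by [].
case: m IH => [|m] IH; first by [].
rewrite perm_aux1.
have H : forall (a : seq T) j, size (pcall m.+1 i.+1 (mv a i j)) = size a.
  by move=> a j; rewrite IH size_mv.
case: ifP => _; rewrite ?H //.
rewrite iter_size; first by rewrite IH size_mv IH.
by move=> a; rewrite IH size_mv.
Qed.

Lemma mv_cons_j T (x : T) a L i b :
  size a = size L ->
  mv (x :: a) i.+1 (if b then (size (x :: L)).-1 else i.+2) =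
  x :: mv a i (if b then (size L).-1 else i.+1).
Proof.
case: b; last by rewrite mv_cons.
case: a => [|y a] /= <-; first by rewrite /mv /=.
by rewrite mv_cons.
Qed.

Lemma pcall_cons T m i (x : T) L : pcall m i.+1 (x :: L) = x :: pcall m i L.
Proof.
elim: m i x L => [|m IH] i x L; first by [].
case: m IH => [|m] IH; first by [].
rewrite !perm_aux1.
have H : forall a : seq T, size a = size L -> forall b, 
   pcall m.+1 i.+2 (mv (x :: a) i.+1 (if b then (size (x :: L)).-1 else i.+2)) =
   x :: pcall m.+1 i.+1 (mv a i (if b then (size L).-1 else i.+1)).
  by move=> a Ha b; rewrite mv_cons_j // IH.
have H1 : forall a : seq T, pcall m.+1 i.+2 (mv (x :: a) i.+1 i.+2) = x :: pcall m.+1 i.+1 (mv a i i.+1).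
  by move=> a; rewrite mv_cons IH.
have Hs : forall (a : seq T) j, size (pcall m.+1 i.+1 (mv a i j)) = size a.
  by move=> a j; rewrite size_pcall size_mv.
rewrite IH H1.
have Hit : forall n (a : seq T), size a = size L ->
  iter n (fun a0 => pcall m.+1 i.+2 (mv a0 i.+1 (if ~~ odd m.+2 then (size (x :: L)).-1 else i.+2))) (x :: a)
  = x :: iter n (fun a0 => pcall m.+1 i.+1 (mv a0 i (if ~~ odd m.+2 then (size L).-1 else i.+1))) a.
  move=> n a Ha; elim: n => //= n ->; rewrite H //.
  by rewrite iter_size.
case: ifP => _; last by [].
rewrite Hit ?H1 //.
by rewrite !Hs size_pcall.
Qed.
Ltac splitif := repeat match goal with
 | |- context [if ?b then _ else _] => let H := fresh "H" in case: (boolP b) => H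
 end.

Definition pim k p := if p == 0 then 1 else if p == 1 then 2 else if p == 2 then 5
  else if p == 3 then 4 else if p <= k - 2 then p + 2 else if p == k - 1 then 3 else 0.
Definition Cc r t := if t <= 2 then t else if t <= r then 2 * t - 1
  else if t == r + 1 then 3 else 2 * (t - r).
Definition Dd r p := if p <= 2 then p else if p == 3 then r + 1
  else if p %% 2 == 1 then (p + 1) %/ 2 else p %/ 2 + r.
Definition l1 k q := if q == 0 then 0 else if q == 1 then 2 else if q == 2 then 5
  else if q == 3 then 4 else if q <= k - 2 then q + 2 else if q == k - 1 then 3 else 1.

Lemma C_le r t : 2 < r -> t <= 2 * r -> Cc r t <= 2 * r.
Proof. rewrite /Cc => *; splitif; lia. Qed.

Lemma piC r t : 2 < r -> t < 2 * r -> pim (2 * r) (Cc r t) = Cc r t.+1.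
Proof. move=> *; rewrite /Cc; splitif; rewrite /pim; splitif; lia. Qed.

Lemma piCk r : 2 < r -> pim (2 * r) (Cc r (2 * r)) = 0.
Proof. move=> *; rewrite /Cc; splitif; rewrite /pim; splitif; lia. Qed.

Lemma DC r p : 2 < r -> p <= 2 * r -> Dd r p <= 2 * r /\ Cc r (Dd r p) = p.
Proof. move=> *; rewrite /Dd; splitif; rewrite /Cc; splitif; lia. Qed.

Lemma D0 r p : 2 < r -> p <= 2 * r -> (Dd r p == 0) = (p == 0).
Proof. rewrite /Dd => *; splitif; lia. Qed.

Lemma final_val r p : 2 < r -> 0 < p <= 2 * r ->
  l1 (2 * r) (Cc r (Dd r p - 1)) = if p == 1 then 0 else p.
Proof. move=> *; rewrite /Dd; splitif; rewrite /Cc; splitif; rewrite /l1; splitif; lia. Qed.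

Lemma head_inj r s t : 2 < r -> s <= 2 * r -> t <= 2 * r ->
  l1 (2 * r) (Cc r s) = l1 (2 * r) (Cc r t) -> s = t.
Proof. move=> ? ? ?; rewrite /Cc; splitif; rewrite /l1; splitif; lia. Qed.

Definition fx (xs : seq nat) :=
  [:: nth 0 xs 1, nth 0 xs 4, nth 0 xs 3 & drop 5 xs ++ [:: nth 0 xs 2; nth 0 xs 0]].

Lemma f_perm (xs : seq nat) : 4 < size xs -> perm_eq (fx xs) xs.
Proof.
case: xs => [|x0 [|x1 [|x2 [|x3 [|x4 R]]]]] //= _.
apply/permP => q /=; rewrite drop0 count_cat /=. lia.
Qed.

Lemma swap_perm (x y : nat) s : perm_eq [:: x, y & s] [:: y, x & s].
Proof. apply/permP => q /=; lia. Qed.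

Lemma pi_le r p : 2 < r -> p <= 2 * r -> pim (2 * r) p <= 2 * r.
Proof. move=> *; rewrite /pim; splitif; lia. Qed.

Lemma C2r r : 2 < r -> Cc r (2 * r) = 2 * r.
Proof. move=> *; rewrite /Cc; splitif; lia. Qed.

Lemma l1_2r r : 2 < r -> l1 (2 * r) (2 * r) = 1.
Proof. move=> *; rewrite /l1; splitif; lia. Qed.


Definition Hf r := forall xs : seq nat, size xs = 2 * r -> uniq xs -> last_perm xs = fx xs.
Definition Pf r (c : seq nat) := pcall (2 * r) 1 (mv c 0 1).

Lemma call_cons r (x : nat) t : size t = 2 * r -> pcall (2 * r) 1 (x :: t) = x :: last_perm t.
Proof. move=> h; rewrite pcall_cons /last_perm /Permutations h. by []. Qed.

Lemma P_expl r (c : seq nat) : Hf r -> 2 < r -> size c = (2 * r).+1 -> uniq c ->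
  Pf r c = nth 0 c 1 :: fx (nth 0 c 0 :: drop 2 c).
Proof.
move=> Hr hr; case: c => [|x0 [|x1 t]] /= hs hu; try lia.
rewrite /Pf.
have -> : mv [:: x0, x1 & t] 0 1 = [:: x1, x0 & t] by [].
rewrite call_cons /= ?drop0; last lia.
rewrite Hr //= ; first lia.
move: hu => /= /andP [] ; rewrite inE negb_or => /andP [h1 h2] /andP [_ h3].
by rewrite h2 h3.
Qed.

Lemma P_size r c : size (Pf r c) = size c.
Proof. by rewrite /Pf size_pcall size_mv. Qed.

Lemma P_uniq r (c : seq nat) : Hf r -> 2 < r -> size c = (2 * r).+1 -> uniq c -> uniq (Pf r c).
Proof.
move=> Hr hr hs hu; rewrite P_expl //.
suff hp : perm_eq (nth 0 c 1 :: fx (nth 0 c 0 :: drop 2 c)) c by rewrite (perm_uniq hp).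
case: c hs hu => [|x0 [|x1 t]] /= hs _; try lia.
rewrite drop0 (perm_trans _ (swap_perm x1 x0 t)) // perm_cons.
apply: f_perm => /=; lia.
Qed.

Lemma P_nth r (c : seq nat) p : Hf r -> 2 < r -> size c = (2 * r).+1 -> uniq c -> p <= 2 * r ->
  nth 0 (Pf r c) p = nth 0 c (pim (2 * r) p).
Proof.
move=> Hr hr hs hu hp; rewrite P_expl //.
case: c hs hu => [|x0 [|x1 [|x2 [|x3 [|x4 [|x5 R]]]]]] /= hs _; try lia.
rewrite /fx /= drop0.
case: p hp => [|[|[|[|q]]]] hp; try by rewrite /pim.
rewrite /= nth_cat.
case: (ltnP q (size R)) => hq.
  have -> : pim (2 * r) q.+4 = q.+3.+3 by rewrite /pim; splitif; lia.
  by [].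
have [->|->] : q = size R \/ q = (size R).+1 by lia.
  have -> : pim (2 * r) (size R).+4 = 3 by rewrite /pim; splitif; lia.
  by rewrite subnn.
have -> : pim (2 * r) (size R).+1.+4 = 0 by rewrite /pim; splitif; lia.
by rewrite subSnn.
Qed.

Lemma iter_P r j (c : seq nat) : Hf r -> 2 < r -> size c = (2 * r).+1 -> uniq c ->
  [/\ size (iter j (Pf r) c) = (2 * r).+1, uniq (iter j (Pf r) c) &
  forall p, p <= 2 * r -> nth 0 (iter j (Pf r) c) p = nth 0 c (iter j (pim (2 * r)) p)].
Proof.
move=> Hr hr hs hu; elim: j => [|j [IHs IHu IHn]] //=.
split; first by rewrite P_size.
  exact: P_uniq.
move=> p hp; rewrite P_nth // IHn; last exact: pi_le.
by rewrite -iterSr.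
Qed.

Lemma iterC r j t : 2 < r -> t + j <= 2 * r -> iter j (pim (2 * r)) (Cc r t) = Cc r (t + j).
Proof.
move=> hr; elim: j => [|j IH] h /=; first by rewrite addn0.
rewrite IH; last lia.
rewrite piC //; last lia.
by rewrite addnS.
Qed.

Lemma iter_k r p : 2 < r -> p <= 2 * r ->
  iter (2 * r) (pim (2 * r)) p = if p == 0 then 2 * r else Cc r (Dd r p - 1).
Proof.
move=> hr hp; have [hD hC] := DC hr hp.
rewrite -{1}hC -(D0 hr hp).
case: eqP => [->|hne].
  by rewrite (iterC (t:=0)) // C2r.
rewrite {1}(_ : 2 * r = (Dd r p - 1) + (2 * r - Dd r p).+1); last by lia.
rewrite iterD iterS iterC; last by lia.
rewrite (_ : Dd r p + (2 * r - Dd r p) = 2 * r); last by lia.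
rewrite piCk //.
have h0 : forall j, iter j (pim (2 * r)) 0 = iter j (pim (2 * r)) (Cc r 0) by [].
rewrite h0 iterC ?add0n //. all: lia.
Qed.

Lemma L1_expl r : Hf r -> 2 < r ->
  pcall (2 * r) 1 (iota 0 (2 * r).+1) = 0 :: fx (iota 1 (2 * r)).
Proof.
move=> Hr hr.
rewrite (_ : iota 0 (2 * r).+1 = 0 :: iota 1 (2 * r)) // call_cons ?size_iota //.
by rewrite Hr ?size_iota ?iota_uniq.
Qed.

Lemma L1_prop r : Hf r -> 2 < r ->
  [/\ size (pcall (2 * r) 1 (iota 0 (2 * r).+1)) = (2 * r).+1,
      uniq (pcall (2 * r) 1 (iota 0 (2 * r).+1)) &
      forall q, q <= 2 * r -> nth 0 (pcall (2 * r) 1 (iota 0 (2 * r).+1)) q = l1 (2 * r) q].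
Proof.
move=> Hr hr; split.
- by rewrite size_pcall size_iota.
- rewrite L1_expl //.
  have hp : perm_eq (0 :: fx (iota 1 (2 * r))) (iota 0 (2 * r).+1).
    rewrite (_ : iota 0 (2 * r).+1 = 0 :: iota 1 (2 * r)) // perm_cons.
    apply: f_perm; rewrite size_iota; lia.
  by rewrite (perm_uniq hp) iota_uniq.
move=> q hq; rewrite L1_expl // /fx.
rewrite !nth_iota; try lia.
rewrite drop_iota.
case: q hq => [|[|[|[|q]]]] hq //=.
rewrite nth_cat size_iota.
case: (ltnP q (2 * r - 5)) => hq'.
  rewrite nth_iota //.
  have -> : l1 (2 * r) q.+4 = 1 + 5 + q by rewrite /l1; splitif; lia.
  by [].
have [->|->] : q = 2 * r - 5 \/ q = (2 * r - 5).+1 by lia.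
  have -> : l1 (2 * r) (2 * r - 5).+4 = 3 by rewrite /l1; splitif; lia.
  by rewrite subnn.
have -> : l1 (2 * r) (2 * r - 5).+1.+4 = 1 by rewrite /l1; splitif; lia.
by rewrite subSnn.
Qed.

Lemma top_eq r L : 2 < r ->
  pcall (2 * r).+1 0 L = Pf r (iter (2 * r - 2) (Pf r) (Pf r (pcall (2 * r) 1 L))).
Proof.
move=> hr.
have e : (2 * r).+1 = (2 * r - 1).+2 by lia.
rewrite {1}e perm_aux1.
have e1 : (2 * r - 1).+1 = 2 * r by lia.
rewrite e1 ifT; last lia.
have ho : ~~ odd (2 * r).+1 = false by rewrite /= oddM.
rewrite ho (_ : (2 * r).+1 - 3 = 2 * r - 2); last lia.
by [].
Qed.

Lemma snd_pair A B (a:A) (b:B) : (a,b).2 = b. Proof. by []. Qed.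

Lemma iter_pair2 A (g h : A -> A) n x s :
  (iter n (fun p => (g (h p.1), rcons p.2 (h p.1))) (x, s)).2 =
  s ++ [seq h (iter i (fun a => g (h a)) x) | i <- iota 0 n].
Proof.
elim: n => [|n IH]; first by rewrite /= cats0.
rewrite iterS /= IH.
rewrite (iter_pair (fun a => g (h a)) (fun p => rcons p.2 (h p.1))) /=.
rewrite -cats1 -catA; congr (s ++ _).
rewrite -[h x :: _]/(map (fun i => h (iter i (fun a => g (h a)) x)) (iota 0 n.+1)).
by rewrite -addn1 iotaD map_cat.
Qed.

Lemma top_calls_eq r L : 2 < r ->
  (perm_aux (2 * r).+1 0 L).2 =
  rcons ([:: L; mv (pcall (2 * r) 1 L) 0 1] ++
         [seq mv (iter i (Pf r) (Pf r (pcall (2 * r) 1 L))) 0 1 | i <- iota 0 (2 * r - 2)])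
        (mv (iter (2 * r - 2) (Pf r) (Pf r (pcall (2 * r) 1 L))) 0 1).
Proof.
move=> hr.
rewrite perm_aux_eq.
have -> : (2 * r == 0) = false by lia.
cbv zeta beta iota.
have -> : (2 < (2 * r).+1) = true by lia.
have ho : ~~ odd (2 * r).+1 = false by rewrite /= oddM.
rewrite ho.
cbv iota.
rewrite snd_pair.
rewrite (iter_pair2 (fun L0 => (perm_aux (2 * r) 1 L0).1) (fun a => mv a 0 1)).
rewrite (iter_pair (fun a => (perm_aux (2 * r) 1 (mv a 0 1)).1) (fun p => rcons p.2 (mv p.1 0 1))).
rewrite (_ : (2 * r).+1 - 3 = 2 * r - 2); last lia.
by [].
Qed.

Lemma head_mv (a : seq nat) : 1 < size a -> head 0 (mv a 0 1) = nth 0 a 1.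
Proof. by case: a => [|x [|y t]]. Qed.

Unset Implicit Arguments.

Theorem lemma2 (k : nat) :
  4 < k -> ~~ odd k ->
  last_perm (iota 0 k) = [:: 1, 4, 3 & iota 5 (k - 5) ++ [:: 2; 0]] ->
  (forall xs : seq nat, size xs = k -> uniq xs ->
     last_perm xs =
       [:: nth 0 xs 1, nth 0 xs 4, nth 0 xs 3 & drop 5 xs ++ [:: nth 0 xs 2; nth 0 xs 0]]) ->
  size (top_calls (iota 0 k.+1)) = k.+1 /\
  uniq [seq head 0 s | s <- top_calls (iota 0 k.+1)] /\
  last_perm (iota 0 k.+1) = [:: 1, 0 & iota 2 (k - 1)].
Proof.
move=> hk hodd _ Hgen.
have [r ek] : exists r, k = 2 * r.
  exists k./2; have := odd_double_half k.
  by rewrite (negbTE hodd) add0n -mul2n => ->.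
subst k.
have hr : 2 < r by lia.
have Hr : Hf r := Hgen.
have [hs1 hu1 hn1] := L1_prop Hr hr.
set L1 := pcall (2 * r) 1 (iota 0 (2 * r).+1) in hs1 hu1 hn1.
have hP1 : size (Pf r L1) = (2 * r).+1 by rewrite P_size.
have hP1u : uniq (Pf r L1) by apply: P_uniq.
have Hit : forall i, i <= 2 * r - 2 -> head 0 (mv (iter i (Pf r) (Pf r L1)) 0 1) = l1 (2 * r) (Cc r (2 + i)).
  move=> i hi.
  have [hs hu hn] := iter_P i.+1 Hr hr hs1 hu1.
  rewrite -iterSr head_mv; last by rewrite hs; lia.
  rewrite hn; last lia.
  rewrite (_ : iter i.+1 (pim (2 * r)) 1 = Cc r (1 + i.+1)); last first.
    by rewrite -(iterC (t:=1)) //; lia.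
  rewrite hn1; last by apply: C_le => //; lia.
  by rewrite add1n.
split; [|split].
- rewrite /top_calls /Permutations size_iota top_calls_eq //.
  rewrite size_rcons size_cat size_map size_iota /=; lia.
- rewrite /top_calls /Permutations size_iota top_calls_eq // -/L1.
  rewrite (_ : map (head 0) _ = [seq l1 (2 * r) (Cc r t) | t <- iota 0 (2 * r).+1]).
    rewrite map_inj_in_uniq ?iota_uniq // => s t.
    rewrite !mem_iota => /andP [_ hs] /andP [_ ht] /(head_inj hr); apply; lia.
  rewrite map_rcons map_cat /= -cats1.
  rewrite [X in iota 1 X](_ : 2 * r = (2 * r - 2 + 1).+1); last lia.
  rewrite /= iotaD map_cat -map_comp.
  congr [:: _, _ & _ ++ _].
  + rewrite head_mv; last by rewrite hs1; lia.
    have h1 : 1 <= 2 * r by lia.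
    by rewrite (hn1 1 h1).
  + rewrite (iotaDl 2 0) -map_comp.
    apply/eq_in_map => i; rewrite mem_iota => /andP [_ hi].
    rewrite /= Hit //; lia.
  + by rewrite /= Hit.
- rewrite /last_perm /Permutations size_iota.
  have -> : (perm_aux (2 * r).+1 0 (iota 0 (2 * r).+1)).1 = pcall (2 * r).+1 0 (iota 0 (2 * r).+1) by [].
  rewrite top_eq // -/L1.
  rewrite -iterSr -iterS (_ : (2 * r - 2).+2 = 2 * r); last lia.
  have [hs hu hn] := iter_P (2 * r) Hr hr hs1 hu1.
  apply: (@eq_from_nth _ 0); first by rewrite hs /= size_iota; lia.
  rewrite hs => p hp.
  rewrite hn; last lia.
  have hp' : p <= 2 * r by lia.
  rewrite iter_k //.
  case: eqP => [->|hne].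
    by rewrite hn1 // l1_2r.
  have [hD _] := DC hr hp'.
  rewrite hn1; last by apply: C_le => //; lia.
  rewrite final_val //; last lia.
  clear hD; case: p hp hp' hne => [|[|q]] // hp hp' _.
  by rewrite /= nth_iota //; lia.
Qed.
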